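(* Let $\mathcal B_1$ and $\mathcal B_2$ be real normed spaces, and let $U_1\subset\mathcal B_1$ and $U_2\subset\mathcal B_2$ be non-empty open subsets. Suppose that $\mathcal T:U_1\to U_2$ is a surjective isometry, i.e. $\|\mathcal T(u)-\mathcal T(v)\|=\|u-v\|$ for all $u,v\in U_1$ and $\mathcal T(U_1)=U_2$. If $f,g\in U_1$ satisfy $(1-r)f+rg\in U_1$ for every $r$ with $0\le r\le 1$, then \[ \mathcal T\left(\frac{f+g}{2}\right)=\frac{\mathcal T(f)+\mathcal T(g)}{2}. \]
   Context: No additional context is needed beyond the statement; $\mathcal T$ is not assumed to be linear or affine. *)

(* Defs.v *)
From Stdlib Require Import Reals.
Open Scope R_scope.

Record NormedSpace := {
  ns_car :> Type;
  ns_zero : ns_car;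
  ns_add : ns_car -> ns_car -> ns_car;
  ns_opp : ns_car -> ns_car;
  ns_scal : R -> ns_car -> ns_car;
  ns_norm : ns_car -> R;
  ns_addA : forall x y z, ns_add x (ns_add y z) = ns_add (ns_add x y) z;
  ns_addC : forall x y, ns_add x y = ns_add y x;
  ns_add0 : forall x, ns_add ns_zero x = x;
  ns_addN : forall x, ns_add (ns_opp x) x = ns_zero;
  ns_scalA : forall a b x, ns_scal a (ns_scal b x) = ns_scal (a * b) x;
  ns_scal1 : forall x, ns_scal 1 x = x;
  ns_scalDr : forall a x y, ns_scal a (ns_add x y) = ns_add (ns_scal a x) (ns_scal a y);
  ns_scalDl : forall a b x, ns_scal (a + b) x = ns_add (ns_scal a x) (ns_scal b x);
  ns_norm_eq0 : forall x, ns_norm x = 0 -> x = ns_zero;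
  ns_normZ : forall a x, ns_norm (ns_scal a x) = Rabs a * ns_norm x;
  ns_normD : forall x y, ns_norm (ns_add x y) <= ns_norm x + ns_norm y
}.

Arguments ns_zero {_}.
Arguments ns_add {_} _ _.
Arguments ns_opp {_} _.
Arguments ns_scal {_} _ _.
Arguments ns_norm {_} _.

Definition ns_sub {V : NormedSpace} (x y : V) : V := ns_add x (ns_opp y).

Definition is_open {V : NormedSpace} (U : V -> Prop) : Prop :=
  forall x, U x -> exists eps, 0 < eps /\ forall y, ns_norm (ns_sub y x) < eps -> U y.

(* Main.v *)
Require Import Defs.
From Stdlib Require Import Reals Lra Lia ZArith ClassicalEpsilon Classical.
Open Scope R_scope.

Lemma addr0 (V : NormedSpace) (x : V) : ns_add x ns_zero = x.
Proof. rewrite ns_addC; apply ns_add0. Qed.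

Lemma scal0 (V : NormedSpace) (x : V) : ns_scal 0 x = ns_zero.
Proof.
  assert (H : ns_scal 0 x = ns_add (ns_scal 0 x) (ns_scal 0 x)).
  { rewrite <- ns_scalDl. f_equal. ring. }
  assert (H2 : ns_add (ns_opp (ns_scal 0 x)) (ns_scal 0 x) =
          ns_add (ns_opp (ns_scal 0 x)) (ns_add (ns_scal 0 x) (ns_scal 0 x))).
  { rewrite <- H. reflexivity. }
  rewrite ns_addA, ns_addN, ns_add0 in H2. auto.
Qed.

Lemma opp_scal (V : NormedSpace) (x : V) : ns_opp x = ns_scal (-1) x.
Proof.
  assert (H : ns_add x (ns_scal (-1) x) = ns_zero).
  { rewrite <- (ns_scal1 V x) at 1. rewrite <- ns_scalDl.
    replace (1 + -1) with 0 by ring. apply scal0. }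
  rewrite <- (addr0 V (ns_opp x)), <- H, ns_addA, ns_addN, ns_add0. reflexivity.
Qed.

Inductive vr := V0 | V1 | V2 | V3.
Inductive tm := TVar (v : vr) | TZero | TAdd (s t : tm) | TOpp (t : tm) | TScal (r : R) (t : tm).

Fixpoint eval {V : NormedSpace} (env : vr -> V) (t : tm) : V :=
  match t with
  | TVar v => env v
  | TZero => ns_zero
  | TAdd s u => ns_add (eval env s) (eval env u)
  | TOpp s => ns_opp (eval env s)
  | TScal r s => ns_scal r (eval env s)
  end.

Definition vr_eqb (v w : vr) : bool :=
  match v, w with
  | V0, V0 | V1, V1 | V2, V2 | V3, V3 => true
  | _, _ => false
  end.

Fixpoint coef (t : tm) (w : vr) : R :=
  match t with
  | TVar v => if vr_eqb v w then 1 else 0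
  | TZero => 0
  | TAdd s u => coef s w + coef u w
  | TOpp s => -1 * coef s w
  | TScal r s => r * coef s w
  end.

Definition lc {V : NormedSpace} (env : vr -> V) (c : vr -> R) : V :=
  ns_add (ns_scal (c V0) (env V0)) (ns_add (ns_scal (c V1) (env V1))
    (ns_add (ns_scal (c V2) (env V2)) (ns_scal (c V3) (env V3)))).

Lemma add4 (V : NormedSpace) (a b c d : V) :
  ns_add (ns_add a b) (ns_add c d) = ns_add (ns_add a c) (ns_add b d).
Proof.
  rewrite <- !ns_addA. f_equal. rewrite !ns_addA. f_equal. apply ns_addC.
Qed.

Lemma mix4 (V : NormedSpace) (p0 p1 p2 p3 q0 q1 q2 q3 : V) :
  ns_add (ns_add p0 (ns_add p1 (ns_add p2 p3))) (ns_add q0 (ns_add q1 (ns_add q2 q3)))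
  = ns_add (ns_add p0 q0) (ns_add (ns_add p1 q1) (ns_add (ns_add p2 q2) (ns_add p3 q3))).
Proof. rewrite (add4 _ p0), (add4 _ p1), (add4 _ p2). reflexivity. Qed.

Lemma eval_lc (V : NormedSpace) (env : vr -> V) (t : tm) : eval env t = lc env (coef t).
Proof.
  unfold lc; induction t as [v| |s IHs u IHu|s IHs|r s IHs]; simpl.
  - destruct v; simpl; rewrite !scal0, ns_scal1, ?addr0, ?ns_add0; reflexivity.
  - rewrite !scal0, !addr0. reflexivity.
  - rewrite IHs, IHu, !ns_scalDl.
    apply mix4.
  - rewrite IHs, opp_scal, !ns_scalDr, !ns_scalA. reflexivity.
  - rewrite IHs, !ns_scalDr, !ns_scalA. reflexivity.
Qed.

Lemma eval_eq (V : NormedSpace) (env : vr -> V) (s t : tm) :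
  (forall w, coef s w = coef t w) -> eval env s = eval env t.
Proof. intros H. rewrite !eval_lc. unfold lc. rewrite !H. reflexivity. Qed.

Ltac reify a0 a1 a2 a3 t :=
  lazymatch t with
  | ns_zero => constr:(TZero)
  | ns_add ?x ?y =>
      let rx := reify a0 a1 a2 a3 x in let ry := reify a0 a1 a2 a3 y in constr:(TAdd rx ry)
  | ns_sub ?x ?y =>
      let rx := reify a0 a1 a2 a3 x in let ry := reify a0 a1 a2 a3 y in constr:(TAdd rx (TOpp ry))
  | ns_opp ?x => let rx := reify a0 a1 a2 a3 x in constr:(TOpp rx)
  | ns_scal ?r ?x => let rx := reify a0 a1 a2 a3 x in constr:(TScal r rx)
  | _ =>
    match constr:((a0, a1, a2, a3, t)) with
    | (?x, _, _, _, ?x) => constr:(TVar V0)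
    | (_, ?x, _, _, ?x) => constr:(TVar V1)
    | (_, _, ?x, _, ?x) => constr:(TVar V2)
    | (_, _, _, ?x, ?x) => constr:(TVar V3)
    end
  end.

Ltac vec_eq a0 a1 a2 a3 :=
  lazymatch goal with
  | |- @eq ?V ?l ?r =>
    let rl := reify a0 a1 a2 a3 l in
    let rr := reify a0 a1 a2 a3 r in
    let env := constr:(fun v : vr => match v with V0 => a0 | V1 => a1 | V2 => a2 | V3 => a3 end : ns_car _) in
    change (eval env rl = eval env rr);
    apply eval_eq; intros []; cbv beta iota delta [coef vr_eqb];
    first [ring | (field; solve [auto | lra]) | field | idtac]
  end.

Lemma norm_zero (V : NormedSpace) : ns_norm (@ns_zero V) = 0.
Proof. rewrite <- (scal0 V ns_zero), ns_normZ, Rabs_R0. ring. Qed.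

Lemma norm_opp (V : NormedSpace) (x : V) : ns_norm (ns_opp x) = ns_norm x.
Proof. rewrite opp_scal, ns_normZ, Rabs_left by lra. ring. Qed.

Lemma norm_nonneg (V : NormedSpace) (x : V) : 0 <= ns_norm x.
Proof.
  assert (H := ns_normD V x (ns_opp x)).
  replace (ns_add x (ns_opp x)) with (@ns_zero V) in H by vec_eq x x x x.
  rewrite norm_zero, norm_opp in H. lra.
Qed.

Lemma sub_sym (V : NormedSpace) (x y : V) : ns_norm (ns_sub x y) = ns_norm (ns_sub y x).
Proof. replace (ns_sub x y) with (ns_opp (ns_sub y x)) by vec_eq x y x x. apply norm_opp. Qed.

Lemma sub_tri (V : NormedSpace) (x y z : V) :
  ns_norm (ns_sub x z) <= ns_norm (ns_sub x y) + ns_norm (ns_sub y z).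
Proof. replace (ns_sub x z) with (ns_add (ns_sub x y) (ns_sub y z)) by vec_eq x y z z. apply ns_normD. Qed.

Lemma sub_eq0 (V : NormedSpace) (x y : V) : ns_norm (ns_sub x y) = 0 -> x = y.
Proof.
  intros H. apply ns_norm_eq0 in H.
  replace x with (ns_add (ns_sub x y) y) by vec_eq x y y y.
  rewrite H, ns_add0. reflexivity.
Qed.

Lemma sub_self (V : NormedSpace) (x : V) : ns_norm (ns_sub x x) = 0.
Proof. replace (ns_sub x x) with (@ns_zero V) by vec_eq x x x x. apply norm_zero. Qed.

Definition Sm {V : NormedSpace} (a b x : V) : Prop :=
  ns_norm (ns_sub x a) = ns_norm (ns_sub a b) / 2 /\ ns_norm (ns_sub x b) = ns_norm (ns_sub a b) / 2.
Definition psi {V : NormedSpace} (a b x : V) : V := ns_sub (ns_add a b) x.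
Definition mid {V : NormedSpace} (a b : V) : V := ns_scal (/ 2) (ns_add a b).

Lemma psi_psi (V : NormedSpace) (a b x : V) : psi a b (psi a b x) = x.
Proof. unfold psi. vec_eq a b x x. Qed.

Lemma psi_iso (V : NormedSpace) (a b x y : V) :
  ns_norm (ns_sub (psi a b x) (psi a b y)) = ns_norm (ns_sub x y).
Proof. unfold psi. replace (ns_sub (ns_sub (ns_add a b) x) (ns_sub (ns_add a b) y)) with (ns_sub y x)
  by vec_eq a b x y. apply sub_sym. Qed.

Lemma psi_mid (V : NormedSpace) (a b : V) : psi a b (mid a b) = mid a b.
Proof. unfold psi, mid. vec_eq a b a a. Qed.

Lemma psi_dist (V : NormedSpace) (a b x : V) :
  ns_norm (ns_sub (psi a b x) x) = 2 * ns_norm (ns_sub x (mid a b)).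
Proof. unfold psi, mid.
  replace (ns_sub (ns_sub (ns_add a b) x) x) with (ns_scal (-2) (ns_sub x (ns_scal (/ 2) (ns_add a b))))
  by vec_eq a b x x. rewrite ns_normZ, Rabs_left by lra. ring. Qed.

Lemma psi_S (V : NormedSpace) (a b x : V) : Sm a b x -> Sm a b (psi a b x).
Proof. unfold Sm, psi. intros [H1 H2].
  replace (ns_sub (ns_sub (ns_add a b) x) a) with (ns_sub b x) by vec_eq a b x x.
  replace (ns_sub (ns_sub (ns_add a b) x) b) with (ns_sub a x) by vec_eq a b x x.
  rewrite !(sub_sym _ _ x). split; assumption. Qed.

Lemma mid_S (V : NormedSpace) (a b : V) : Sm a b (mid a b).
Proof. unfold Sm, mid.
  replace (ns_sub (ns_scal (/ 2) (ns_add a b)) a) with (ns_scal (/2) (ns_sub b a)) by vec_eq a b a a.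
  replace (ns_sub (ns_scal (/ 2) (ns_add a b)) b) with (ns_scal (/2) (ns_sub a b)) by vec_eq a b a a.
  rewrite !ns_normZ, Rabs_right by lra. rewrite (sub_sym _ b a). split; field. Qed.

Lemma S_diam (V : NormedSpace) (a b x y : V) : Sm a b x -> Sm a b y ->
  ns_norm (ns_sub x y) <= ns_norm (ns_sub a b).
Proof. intros [H1 _] [H2 _]. eapply Rle_trans. apply (sub_tri _ x a y).
  rewrite H1, (sub_sym _ a y), H2. lra. Qed.

Lemma iter_bound (V : NormedSpace) (a b : V) : forall n (h k : V -> V),
  (forall x, Sm a b x -> Sm a b (h x)) -> (forall x, Sm a b x -> Sm a b (k x)) ->
  (forall x y, Sm a b x -> Sm a b y -> ns_norm (ns_sub (h x) (h y)) = ns_norm (ns_sub x y)) ->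
  (forall x y, Sm a b x -> Sm a b y -> ns_norm (ns_sub (k x) (k y)) = ns_norm (ns_sub x y)) ->
  (forall x, Sm a b x -> k (h x) = x) -> (forall x, Sm a b x -> h (k x) = x) ->
  2 ^ n * ns_norm (ns_sub (h (mid a b)) (mid a b)) <= ns_norm (ns_sub a b).
Proof.
  induction n; intros h k hS kS hI kI kh hk.
  - simpl. rewrite Rmult_1_l. apply S_diam; auto using mid_S.
  - set (z := mid a b).
    assert (Hz : Sm a b z) by apply mid_S.
    assert (E : ns_norm (ns_sub (psi a b (k (psi a b (h z)))) z) = 2 * ns_norm (ns_sub (h z) z)).
    { assert (Hpz : psi a b z = z) by apply psi_mid.
      replace (ns_sub (psi a b (k (psi a b (h z)))) z) with
        (ns_sub (psi a b (k (psi a b (h z)))) (psi a b z)) by (rewrite Hpz; reflexivity).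
      rewrite psi_iso.
      replace (ns_sub (k (psi a b (h z))) z) with
        (ns_sub (k (psi a b (h z))) (k (h z))) by (rewrite (kh z Hz); reflexivity).
      rewrite kI; auto using psi_S.
      rewrite psi_dist. reflexivity. }
    assert (IH := IHn (fun x => psi a b (k (psi a b (h x)))) (fun x => k (psi a b (h (psi a b x))))).
    simpl in IH. fold z in IH. rewrite E in IH. simpl.
    replace (2 * 2 ^ n * ns_norm (ns_sub (h z) z)) with (2 ^ n * (2 * ns_norm (ns_sub (h z) z))) by ring.
    apply IH; intros.
    + auto using psi_S.
    + auto using psi_S.
    + rewrite psi_iso, kI, psi_iso, hI; auto using psi_S.
    + rewrite kI, psi_iso, hI, psi_iso; auto using psi_S.
    + rewrite psi_psi, hk, psi_psi, kh; auto using psi_S.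
    + rewrite hk, psi_psi, kh, psi_psi; auto using psi_S.
Qed.

Lemma pow2_ge (n : nat) : INR n <= 2 ^ n.
Proof. induction n. simpl; lra. rewrite S_INR. simpl. assert (1 <= 2 ^ n) by (apply pow_R1_Rle; lra). lra. Qed.

Lemma zero_of_bound (c d : R) : 0 <= c -> (forall n, 2 ^ n * c <= d) -> c = 0.
Proof.
  intros Hc H. destruct (Req_dec c 0) as [|Hn]; auto. exfalso.
  assert (Hp : 0 < c) by lra.
  destruct (archimed (d / c)) as [H1 _].
  assert (Hz : (0 <= up (d / c))%Z).
  { apply le_IZR. specialize (H 0%nat). simpl in H.
    assert (0 <= d) by (assert (0 <= c) by lra; lra).
    assert (0 <= d / c) by (unfold Rdiv; apply Rmult_le_pos; [lra| left; apply Rinv_0_lt_compat; lra]). lra. }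
  specialize (H (Z.to_nat (up (d / c)))).
  assert (Hn2 := pow2_ge (Z.to_nat (up (d / c)))).
  rewrite INR_IZR_INZ, Z2Nat.id in Hn2 by assumption.
  assert (d / c < 2 ^ Z.to_nat (up (d / c))) by lra.
  apply (Rmult_lt_compat_r c) in H0; auto. unfold Rdiv in H0.
  rewrite Rmult_assoc, Rinv_l, Rmult_1_r in H0 by lra. lra.
Qed.

Lemma local_mid (B1 B2 : NormedSpace) (U1 : B1 -> Prop) (U2 : B2 -> Prop) (T : B1 -> B2)
  (hmaps : forall u, U1 u -> U2 (T u))
  (hsurj : forall w, U2 w -> exists u, U1 u /\ T u = w)
  (hiso : forall u v, U1 u -> U1 v ->
     ns_norm (ns_sub (T u) (T v)) = ns_norm (ns_sub u v))
  (a b : B1) (eps : R) (ha : U1 a)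
  (g1 : forall y, ns_norm (ns_sub y a) < eps -> U1 y)
  (g2 : forall w, ns_norm (ns_sub w (T a)) < eps -> U2 w)
  (hab : ns_norm (ns_sub b a) < eps) : T (mid a b) = mid (T a) (T b).
Proof.
  assert (hb : U1 b) by auto.
  assert (hd : ns_norm (ns_sub a b) < eps) by (rewrite sub_sym; auto).
  assert (hd0 := norm_nonneg _ (ns_sub a b)).
  assert (HS1 : forall x, Sm a b x -> U1 x).
  { intros x [H1 _]. apply g1. lra. }
  assert (HTd : ns_norm (ns_sub (T a) (T b)) = ns_norm (ns_sub a b)) by auto.
  assert (HS2 : forall w, Sm (T a) (T b) w -> U2 w).
  { intros w [H1 _]. apply g2. lra. }
  pose (Ti := fun w => epsilon (inhabits a) (fun u => U1 u /\ T u = w)).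
  assert (HTi : forall w, U2 w -> U1 (Ti w) /\ T (Ti w) = w).
  { intros w Hw. apply (epsilon_spec (inhabits a) (fun u => U1 u /\ T u = w)). auto. }
  assert (HTT : forall x, Sm a b x -> Ti (T x) = x).
  { intros x Hx. apply sub_eq0. destruct (HTi (T x)) as [H1 H2]; auto.
    rewrite <- hiso by auto. rewrite H2. apply sub_self. }
  assert (TS : forall x, Sm a b x -> Sm (T a) (T b) (T x)).
  { intros x Hx. pose proof (HS1 x Hx). unfold Sm in *. rewrite !hiso by auto. auto. }
  assert (TiS : forall w, Sm (T a) (T b) w -> Sm a b (Ti w)).
  { intros w Hw. destruct (HTi w) as [H1 H2]; auto. unfold Sm in *.
    rewrite <- (hiso (Ti w) a), <- (hiso (Ti w) b), H2, <- HTd by auto. auto. }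
  assert (TiI : forall w w', Sm (T a) (T b) w -> Sm (T a) (T b) w' ->
     ns_norm (ns_sub (Ti w) (Ti w')) = ns_norm (ns_sub w w')).
  { intros w w' Hw Hw'. destruct (HTi w) as [H1 H2]; auto. destruct (HTi w') as [H3 H4]; auto.
    rewrite <- (hiso (Ti w) (Ti w')), H2, H4 by auto. reflexivity. }
  assert (TI : forall x y, Sm a b x -> Sm a b y ->
     ns_norm (ns_sub (T x) (T y)) = ns_norm (ns_sub x y)) by auto.
  assert (TTi : forall w, Sm (T a) (T b) w -> T (Ti w) = w) by (intros; apply HTi; auto).
  set (h := fun x => psi a b (Ti (psi (T a) (T b) (T x)))).
  set (k := fun x => Ti (psi (T a) (T b) (T (psi a b x)))).
  assert (Hc : ns_norm (ns_sub (h (mid a b)) (mid a b)) = 0).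
  { apply (zero_of_bound _ (ns_norm (ns_sub a b))). apply norm_nonneg.
    intros n. apply (iter_bound B1 a b n h k); unfold h, k; intros.
    - auto using psi_S.
    - auto using psi_S.
    - rewrite psi_iso, TiI, psi_iso, TI; auto using psi_S.
    - rewrite TiI, psi_iso, TI, psi_iso; auto using psi_S.
    - rewrite psi_psi, TTi, psi_psi, HTT; auto using psi_S.
    - rewrite TTi, psi_psi, HTT, psi_psi; auto using psi_S. }
  apply sub_eq0 in Hc. unfold h in Hc.
  set (z := mid a b) in *.
  assert (Hz : Sm a b z) by apply mid_S.
  assert (E1 : Ti (psi (T a) (T b) (T z)) = z).
  { rewrite <- (psi_psi _ a b (Ti _)), Hc. apply psi_mid. }
  assert (E2 : psi (T a) (T b) (T z) = T z).
  { rewrite <- (TTi (psi (T a) (T b) (T z))) by auto using psi_S. rewrite E1. reflexivity. }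
  set (w := T z) in *. clearbody w.
  unfold psi in E2. unfold mid.
  transitivity (ns_scal (/2) (ns_add (ns_sub (ns_add (T a) (T b)) w) w)).
  - rewrite E2. vec_eq w w w w.
  - vec_eq (T a) (T b) w w.
Qed.

Definition good {B1 B2 : NormedSpace} (U1 : B1 -> Prop) (U2 : B2 -> Prop) (T : B1 -> B2) (x : B1) (eps : R) :=
  (forall y, ns_norm (ns_sub y x) < eps -> U1 y) /\ (forall w, ns_norm (ns_sub w (T x)) < eps -> U2 w).

Definition xt {V : NormedSpace} (f g : V) (t : R) : V := ns_add (ns_scal (1 - t) f) (ns_scal t g).

Lemma xt_dist (V : NormedSpace) (f g : V) (t s : R) :
  ns_norm (ns_sub (xt f g t) (xt f g s)) = Rabs (t - s) * ns_norm (ns_sub g f).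
Proof. unfold xt. rewrite <- ns_normZ. f_equal. vec_eq f g f f. Qed.

Lemma good_mono (B1 B2 : NormedSpace) (U1 : B1 -> Prop) (U2 : B2 -> Prop) (T : B1 -> B2) x e e' :
  good U1 U2 T x e -> e' <= e -> good U1 U2 T x e'.
Proof. intros [H1 H2] He. split; intros; [apply H1 | apply H2]; lra. Qed.

Lemma good_shift (B1 B2 : NormedSpace) (U1 : B1 -> Prop) (U2 : B2 -> Prop) (T : B1 -> B2)
  (hiso : forall u v, U1 u -> U1 v ->
     ns_norm (ns_sub (T u) (T v)) = ns_norm (ns_sub u v)) x y eps :
  U1 x -> good U1 U2 T x eps -> ns_norm (ns_sub y x) < eps / 2 -> good U1 U2 T y (eps / 2).
Proof.
  intros Hx [H1 H2] Hy. assert (Uy : U1 y) by (apply H1; assert (0 <= ns_norm (ns_sub y x)) by apply norm_nonneg; lra).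
  split.
  - intros z Hz. apply H1. pose proof (sub_tri _ z y x). lra.
  - intros w Hw. apply H2. pose proof (sub_tri _ w (T y) (T x)). rewrite hiso in H by auto. lra.
Qed.

Lemma good_exists (B1 B2 : NormedSpace) (U1 : B1 -> Prop) (U2 : B2 -> Prop) (T : B1 -> B2)
  (hU1o : is_open U1) (hU2o : is_open U2) (hmaps : forall u, U1 u -> U2 (T u)) x :
  U1 x -> exists eps, 0 < eps /\ good U1 U2 T x eps.
Proof.
  intros Hx. destruct (hU1o x Hx) as [e1 [He1 H1]]. destruct (hU2o (T x) (hmaps x Hx)) as [e2 [He2 H2]].
  exists (Rmin e1 e2). split. apply Rmin_pos; auto.
  split; intros; [apply H1 | apply H2]; pose proof (Rmin_l e1 e2); pose proof (Rmin_r e1 e2); lra.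
Qed.

Lemma uniform_good (B1 B2 : NormedSpace) (U1 : B1 -> Prop) (U2 : B2 -> Prop) (T : B1 -> B2)
  (hU1o : is_open U1) (hU2o : is_open U2) (hmaps : forall u, U1 u -> U2 (T u))
  (hiso : forall u v, U1 u -> U1 v ->
     ns_norm (ns_sub (T u) (T v)) = ns_norm (ns_sub u v))
  (f g : B1)
  (hseg : forall r, 0 <= r <= 1 -> U1 (ns_add (ns_scal (1 - r) f) (ns_scal r g))) :
  exists eps, 0 < eps /\ forall t, 0 <= t <= 1 -> good U1 U2 T (xt f g t) eps.
Proof.
  pose (E := fun s => 0 <= s <= 1 /\ exists eps, 0 < eps /\ forall t, 0 <= t <= s -> good U1 U2 T (xt f g t) eps).
  assert (E0 : E 0).
  { split. lra. destruct (good_exists _ _ U1 U2 T hU1o hU2o hmaps (xt f g 0)) as [e [He Hg]].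
    apply hseg; lra. exists e. split; auto. intros t Ht. replace t with 0 by lra. auto. }
  assert (Hb : bound E). { exists 1. intros s [Hs _]. lra. }
  destruct (completeness E Hb (ex_intro _ 0 E0)) as [c [Hub Hlub]].
  assert (Hc0 : 0 <= c) by (apply Hub; auto).
  assert (Hc1 : c <= 1). { apply Hlub. intros s [Hs _]. lra. }
  assert (Uc : U1 (xt f g c)) by (apply hseg; lra).
  destruct (good_exists _ _ U1 U2 T hU1o hU2o hmaps _ Uc) as [ec [Hec Hgc]].
  set (L := ns_norm (ns_sub g f) + 1).
  assert (HL : 0 < L) by (unfold L; pose proof (norm_nonneg _ (ns_sub g f)); lra).
  assert (HL' : ns_norm (ns_sub g f) <= L) by (unfold L; lra).
  set (del := ec / (2 * L)).
  assert (Hdel : 0 < del) by (unfold del; apply Rdiv_lt_0_compat; lra).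
  assert (Hnear : forall t, Rabs (t - c) < del -> good U1 U2 T (xt f g t) (ec / 2)).
  { intros t Ht. apply (good_shift _ _ U1 U2 T hiso (xt f g c)); auto.
    rewrite xt_dist.
    apply Rle_lt_trans with (Rabs (t - c) * L).
    apply Rmult_le_compat_l; auto using Rabs_pos.
    apply Rlt_le_trans with (del * L). apply Rmult_lt_compat_r; auto.
    unfold del. right. field. lra. }
  destruct (classic (exists s, E s /\ c - del < s)) as [[s [[Hs [es [Hes Hgs]]] Hsc]] | Hno].
  - set (c' := Rmin 1 (c + del / 2)).
    assert (Ec' : E c').
    { split. unfold c'. split. apply Rmin_glb; lra. apply Rmin_l.
      exists (Rmin es (ec / 2)). split. apply Rmin_pos; lra.
      intros t Ht. destruct (Rle_dec t s).
      - apply (good_mono _ _ U1 U2 T _ es). apply Hgs; lra. apply Rmin_l.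
      - apply (good_mono _ _ U1 U2 T _ (ec / 2)). apply Hnear.
        assert (t <= c + del / 2) by (pose proof (Rmin_r 1 (c + del / 2)); unfold c' in Ht; lra).
        assert (s <= c) by (apply Hub; split; [lra | exists es; auto]).
        apply Rabs_def1; lra. apply Rmin_r. }
    assert (c' <= c) by (apply Hub; auto).
    assert (Hc'1 : c' = 1).
    { unfold c' in *. unfold Rmin in *. destruct (Rle_dec 1 (c + del / 2)); lra. }
    rewrite Hc'1 in Ec'. destruct Ec' as [_ [e [He Hg]]]. exists e. auto.
  - exfalso. assert (c <= c - del). { apply Hlub. intros s Hs. destruct (Rle_dec s (c - del)); auto.
      exfalso. apply Hno. exists s. split; auto. lra. }
    lra.
Qed.

Theorem lemma2p1 (B1 B2 : NormedSpace) (U1 : B1 -> Prop) (U2 : B2 -> Prop)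
  (T : B1 -> B2)
  (hU1ne : exists x, U1 x) (hU2ne : exists y, U2 y)
  (hU1o : is_open U1) (hU2o : is_open U2)
  (hmaps : forall u, U1 u -> U2 (T u))
  (hsurj : forall w, U2 w -> exists u, U1 u /\ T u = w)
  (hiso : forall u v, U1 u -> U1 v ->
     ns_norm (ns_sub (T u) (T v)) = ns_norm (ns_sub u v))
  (f g : B1) (hf : U1 f) (hg : U1 g)
  (hseg : forall r, 0 <= r <= 1 -> U1 (ns_add (ns_scal (1 - r) f) (ns_scal r g))) :
  T (ns_scal (/ 2) (ns_add f g)) = ns_scal (/ 2) (ns_add (T f) (T g)).
Proof.
  destruct (uniform_good _ _ U1 U2 T hU1o hU2o hmaps hiso f g hseg) as [eps [Heps Hgood]].
  set (L := ns_norm (ns_sub g f) + 1).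
  assert (HL : 0 < L) by (unfold L; pose proof (norm_nonneg _ (ns_sub g f)); lra).
  assert (HL' : ns_norm (ns_sub g f) <= L) by (unfold L; lra).
  assert (HeL : 0 < eps / L) by (apply Rdiv_lt_0_compat; lra).
  destruct (archimed_cor1 (eps / L) HeL) as [N [HN HN0]].
  assert (HNp : 0 < INR N) by (apply lt_0_INR; lia).
  set (M := INR (2 * N)).
  assert (HM : M = 2 * INR N) by (unfold M; rewrite mult_INR; reflexivity).
  assert (HM0 : M <> 0) by lra.
  assert (HN1 : INR N <> 0) by lra.
  set (p := fun k : nat => xt f g (INR k / M)).
  assert (Hrange : forall k, (k <= 2 * N)%nat -> 0 <= INR k / M <= 1).
  { intros k Hk. apply le_INR in Hk. fold M in Hk. split.
    - apply Rmult_le_pos. apply pos_INR. left. apply Rinv_0_lt_compat. lra.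
    - unfold Rdiv. apply (Rmult_le_reg_r M). lra. rewrite Rmult_assoc, Rinv_l by lra. lra. }
  assert (Hmid : forall k, (S (S k) <= 2 * N)%nat -> T (p (S k)) = mid (T (p k)) (T (p (S (S k))))).
  { intros k Hk.
    assert (Hpk : good U1 U2 T (p k) eps) by (apply Hgood, Hrange; lia).
    destruct Hpk as [G1 G2].
    assert (E : p (S k) = mid (p k) (p (S (S k)))).
    { unfold p, mid, xt. rewrite !S_INR. vec_eq f g f f. }
    rewrite E. apply (local_mid _ _ U1 U2 T hmaps hsurj hiso _ _ eps); auto.
    - apply hseg, Hrange. lia.
    - unfold p. rewrite xt_dist. rewrite !S_INR.
      replace ((INR k + 1 + 1) / M - INR k / M) with (2 / M) by (field; lra).
      rewrite Rabs_right by (apply Rle_ge; unfold Rdiv; apply Rmult_le_pos; [lra | left; apply Rinv_0_lt_compat; lra]).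
      apply Rle_lt_trans with (2 / M * L). apply Rmult_le_compat_l; auto.
      unfold Rdiv; apply Rmult_le_pos; [lra | left; apply Rinv_0_lt_compat; lra].
      rewrite HM. replace (2 / (2 * INR N) * L) with (/ INR N * L) by (field; lra).
      apply (Rmult_lt_compat_r L) in HN; auto. unfold Rdiv in HN.
      rewrite Rmult_assoc, Rinv_l, Rmult_1_r in HN by lra. exact HN. }
  set (D := ns_sub (T (p 1%nat)) (T (p 0%nat))).
  assert (Hlin : forall k, (S k <= 2 * N)%nat ->
     T (p k) = ns_add (T (p 0%nat)) (ns_scal (INR k) D) /\
     T (p (S k)) = ns_add (T (p 0%nat)) (ns_scal (INR (S k)) D)).
  { induction k; intros Hk.
    - simpl INR. unfold D. split; vec_eq (T (p 0%nat)) (T (p 1%nat)) D D.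
    - destruct IHk as [IH1 IH2]. lia. split; auto.
      assert (H := Hmid k Hk). unfold mid in H.
      transitivity (ns_sub (ns_scal 2 (T (p (S k)))) (T (p k))).
      + rewrite H. vec_eq (T (p k)) (T (p (S (S k)))) D D.
      + rewrite IH1, IH2. rewrite !S_INR. vec_eq (T (p 0%nat)) D D D. }
  assert (Hf : p 0%nat = f).
  { unfold p, xt. simpl INR. vec_eq f g f f. }
  assert (Hg : p (2 * N)%nat = g).
  { unfold p, xt. fold M. vec_eq f g f f. }
  assert (Hm : p N = ns_scal (/ 2) (ns_add f g)).
  { unfold p, xt. rewrite HM. vec_eq f g f f. }
  rewrite <- Hm. rewrite <- Hf, <- Hg.
  destruct (Hlin N) as [H1 _]. lia.
  destruct (Nat.eq_dec (2 * N) 0) as [e|ne]. lia.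
  destruct (Hlin (pred (2 * N))) as [_ H2]. lia.
  replace (S (pred (2 * N))) with (2 * N)%nat in H2 by lia.
  rewrite H1, H2, mult_INR. simpl (INR 2).
  vec_eq (T (p 0%nat)) D D D.
Qed.
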